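(* For all $\alpha\in(0,1]$ and $\eta\in(0,\alpha)$ there is a constant $C=C(\alpha,\eta)<\infty$ such that the following holds. Let $(X,\mu)$ be a standard Borel probability space, let $\mathcal{S},\mathcal{T}$ be finite Borel partitions of $X$, and let $I=\mathrm{I}_\mu(\mathcal{S};\mathcal{T})$. Then for every Borel $U\subseteq X$ with $\mu(U)\ge\alpha$ there is a subset $S\subseteq U$ with \[\log|S|\le C(I+1)\quad\text{and}\quad \mu\big(U\cap\mathcal{T}(U\cap\mathcal{S}(S))\big)>\mu(U)-\eta.\]
   Context: $\mathrm{I}_\mu(\mathcal{S};\mathcal{T})=\mathrm{H}_\mu(\mathcal{S})+\mathrm{H}_\mu(\mathcal{T})-\mathrm{H}_\mu(\mathcal{S}\vee\mathcal{T})$ is the mutual information (Shannon entropies of partitions). For a partition $\mathcal{P}$ and a set $A$, $\mathcal{P}(A)$ denotes the union of all cells of $\mathcal{P}$ that meet $A$ (so $\mathcal{P}(x)$ is the cell containing $x$). *)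

(* Defs.v *)
From Stdlib Require Import Reals List.
Open Scope R_scope.

Record ProbSpace (X : Type) := {
  meas : (X -> Prop) -> Prop;
  mu : (X -> Prop) -> R;
  meas_full : meas (fun _ => True);
  meas_compl : forall A, meas A -> meas (fun x => ~ A x);
  meas_cunion : forall A : nat -> X -> Prop,
      (forall n, meas (A n)) -> meas (fun x => exists n, A n x);
  mu_nonneg : forall A, meas A -> 0 <= mu A;
  mu_full : mu (fun _ => True) = 1;
  mu_sigma_additive : forall A : nat -> X -> Prop,
      (forall n, meas (A n)) ->
      (forall n m x, A n x -> A m x -> n = m) ->
      infinite_sum (fun n => mu (A n)) (mu (fun x => exists n, A n x))
}.
Arguments meas {X} _ _.
Arguments mu {X} _ _.

(* A finite measurable partition, given by a cell-index function with
   measurable fibres (cells may be empty). *)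
Record FinPartition (X : Type) (P : ProbSpace X) := {
  ncells : nat;
  cell : X -> nat;
  cell_lt : forall x, (cell x < ncells)%nat;
  cell_meas : forall i, meas P (fun x => cell x = i)
}.
Arguments ncells {X P} _.
Arguments cell {X P} _ _.

Definition rsum (n : nat) (f : nat -> R) : R :=
  fold_right Rplus 0 (map f (seq 0 n)).

Definition plogp (p : R) : R := if Req_EM_T p 0 then 0 else p * ln p.

Definition entropy {X} {P : ProbSpace X} (Q : FinPartition X P) : R :=
  - rsum (ncells Q) (fun i => plogp (mu P (fun x => cell Q x = i))).

Definition entropy_join {X} {P : ProbSpace X} (S T : FinPartition X P) : R :=
  - rsum (ncells S) (fun i => rsum (ncells T) (fun j =>
      plogp (mu P (fun x => cell S x = i /\ cell T x = j)))).

Definition mutual_info {X} {P : ProbSpace X} (S T : FinPartition X P) : R :=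
  entropy S + entropy T - entropy_join S T.

(* Q(A): the union of all cells of Q meeting A *)
Definition saturate {X} {P : ProbSpace X} (Q : FinPartition X P)
  (A : X -> Prop) : X -> Prop :=
  fun x => exists y, A y /\ cell Q y = cell Q x.

Definition inter {X} (A B : X -> Prop) : X -> Prop := fun x => A x /\ B x.

(* Main.v *)
Require Import Defs.
From Stdlib Require Import Reals List Lra Lia Bool ZArith.
From Stdlib Require Import Classical ClassicalEpsilon FunctionalExtensionality PropExtensionality.
Open Scope R_scope.

Arguments meas_full {X} _.
Arguments meas_compl {X} _ _ _.
Arguments meas_cunion {X} _ _ _.
Arguments mu_nonneg {X} _ _ _.
Arguments mu_full {X} _.
Arguments mu_sigma_additive {X} _ _ _ _.
Arguments cell_lt {X P} _ _.
Arguments cell_meas {X P} _ _.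
Lemma rsum_0 f : rsum 0 f = 0.
Proof. reflexivity. Qed.

Lemma fold_app_R (l : list R) x : fold_right Rplus 0 (l ++ x :: nil) = fold_right Rplus 0 l + x.
Proof. induction l; simpl; [lra| rewrite IHl; lra]. Qed.

Lemma rsum_S n f : rsum (S n) f = rsum n f + f n.
Proof. unfold rsum. rewrite seq_S, map_app. simpl. apply fold_app_R. Qed.

Lemma rsum_ext n f g : (forall i, (i < n)%nat -> f i = g i) -> rsum n f = rsum n g.
Proof. induction n; intros H; [reflexivity|]. rewrite !rsum_S, IHn by (intros; apply H; lia).
  rewrite H by lia. reflexivity. Qed.

Lemma rsum_plus n f g : rsum n (fun i => f i + g i) = rsum n f + rsum n g.
Proof. induction n; [simpl; unfold rsum; simpl; lra|]. rewrite !rsum_S, IHn. lra. Qed.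

Lemma rsum_scal n c f : rsum n (fun i => c * f i) = c * rsum n f.
Proof. induction n; [unfold rsum; simpl; lra|]. rewrite !rsum_S, IHn. lra. Qed.

Lemma rsum_le n f g : (forall i, (i < n)%nat -> f i <= g i) -> rsum n f <= rsum n g.
Proof. induction n; intros H; [unfold rsum; simpl; lra|]. rewrite !rsum_S.
  assert (f n <= g n) by (apply H; lia). assert (rsum n f <= rsum n g) by (apply IHn; intros; apply H; lia). lra. Qed.

Lemma rsum_const0 n : rsum n (fun _ => 0) = 0.
Proof. induction n; [reflexivity|]. rewrite rsum_S, IHn. lra. Qed.

Lemma rsum_nonneg n f : (forall i, (i < n)%nat -> 0 <= f i) -> 0 <= rsum n f.
Proof. intros H. rewrite <- (rsum_const0 n). apply rsum_le. auto. Qed.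

Lemma rsum_swap n m f : rsum n (fun i => rsum m (fun j => f i j)) = rsum m (fun j => rsum n (fun i => f i j)).
Proof. induction n.
  - unfold rsum at 1; simpl. symmetry. apply rsum_const0.
  - rewrite rsum_S, IHn. rewrite <- rsum_plus. apply rsum_ext. intros. rewrite rsum_S. reflexivity. Qed.

Lemma rsum_minus n f g : rsum n (fun i => f i - g i) = rsum n f - rsum n g.
Proof. induction n; [unfold rsum; simpl; lra|]. rewrite !rsum_S, IHn. lra. Qed.

Lemma pred_ext {X} (A B : X -> Prop) : (forall x, A x <-> B x) -> A = B.
Proof. intros H. apply functional_extensionality. intros x. apply propositional_extensionality. auto. Qed.

Lemma meas_ext {X} (P : ProbSpace X) A B : (forall x, A x <-> B x) -> meas P A -> meas P B.
Proof. intros H. rewrite (pred_ext A B H). auto. Qed.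

Lemma mu_ext {X} (P : ProbSpace X) A B : (forall x, A x <-> B x) -> mu P A = mu P B.
Proof. intros H. rewrite (pred_ext A B H). auto. Qed.

Lemma meas_empty {X} (P : ProbSpace X) : meas P (fun _ => False).
Proof. apply (meas_ext P (fun x => ~ True)). tauto. apply meas_compl, meas_full. Qed.

Lemma mu_empty {X} (P : ProbSpace X) : mu P (fun _ => False) = 0.
Proof.
  set (e := mu P (fun _ => False)).
  assert (He : 0 <= e) by (apply mu_nonneg, meas_empty).
  pose proof (mu_sigma_additive P (fun _ _ => False) (fun _ => meas_empty P) ltac:(intros; contradiction)) as H.
  assert (Hu : mu P (fun x => exists n : nat, False) = e) by (apply mu_ext; firstorder).
  cbv beta in H. rewrite Hu in H.
  assert (Hs : forall N, sum_f_R0 (fun _ => e) N = INR (S N) * e).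
  { induction N; simpl sum_f_R0. simpl; lra. rewrite IHN. rewrite (S_INR (S N)). lra. }
  destruct (Rle_lt_or_eq_dec 0 e He) as [Hp|]; [|auto].
  exfalso. fold e in H. destruct (H e Hp) as [N HN]. specialize (HN (S (S N)) ltac:(lia)).
  unfold Rdist in HN. rewrite Hs in HN. rewrite !S_INR in HN.
  pose proof (pos_INR N).
  rewrite Rabs_right in HN by nra. nra.
Qed.

Lemma meas_and {X} (P : ProbSpace X) A B : meas P A -> meas P B -> meas P (fun x => A x /\ B x).
Proof. intros HA HB.
  apply (meas_ext P (fun x => ~ (exists n : nat, (fun n x => if Nat.eq_dec n 0 then ~ A x else ~ B x) n x))).
  - intros x. split.
    + intros H. split; apply NNPP; intros Hn; apply H; [exists 0%nat | exists 1%nat]; simpl; auto.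
    + intros [H1 H2] [n Hn]. destruct (Nat.eq_dec n 0); auto.
  - apply meas_compl, meas_cunion. intros n. destruct (Nat.eq_dec n 0); apply meas_compl; auto.
Qed.

Lemma meas_const {X} (P : ProbSpace X) (Q : Prop) A : meas P A -> meas P (fun x => Q /\ A x).
Proof. intros HA. destruct (classic Q).
  - apply (meas_ext P A); [firstorder|auto].
  - apply (meas_ext P (fun _ => False)); [firstorder| apply meas_empty]. Qed.

Lemma mu_add2 {X} (P : ProbSpace X) A B : meas P A -> meas P B -> (forall x, A x -> B x -> False) ->
  mu P (fun x => A x \/ B x) = mu P A + mu P B.
Proof. intros HA HB Hd.
  set (F := fun n x => match n with 0%nat => A x | 1%nat => B x | _ => False end).
  assert (HF : forall n, meas P (F n)) by (intros [|[|n]]; simpl; auto using meas_empty).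
  assert (Hdis : forall n m x, F n x -> F m x -> n = m).
  { intros [|[|n]] [|[|m]] x; simpl; try tauto; intros; exfalso; eauto. }
  pose proof (mu_sigma_additive P F HF Hdis) as H.
  assert (Hu : mu P (fun x => exists n, F n x) = mu P (fun x => A x \/ B x)).
  { apply mu_ext. intros x; split. intros [[|[|n]] Hn]; simpl in Hn; tauto.
    intros [H1|H1]; [exists 0%nat|exists 1%nat]; auto. }
  rewrite Hu in H. apply (uniqueness_sum _ _ _ H).
  intros eps Heps. exists 1%nat. intros n Hn.
  assert (Hs : sum_f_R0 (fun n => mu P (F n)) n = mu P A + mu P B).
  { induction n. lia. destruct n. simpl. reflexivity.
    simpl sum_f_R0. simpl sum_f_R0 in IHn. rewrite IHn by lia. simpl F. rewrite mu_empty. lra. }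
  unfold Rdist. rewrite Hs. rewrite Rminus_diag, Rabs_R0. auto.
Qed.

Lemma mu_mono {X} (P : ProbSpace X) A B : meas P A -> meas P B -> (forall x, A x -> B x) -> mu P A <= mu P B.
Proof. intros HA HB Hs.
  assert (HB' : mu P B = mu P (fun x => A x \/ (B x /\ ~ A x))).
  { apply mu_ext. intros x; split; [|firstorder]. intros. destruct (classic (A x)); tauto. }
  rewrite HB', mu_add2; auto. pose proof (mu_nonneg P (fun x => B x /\ ~ A x) (meas_and P _ _ HB (meas_compl P _ HA))). lra.
  apply meas_and; auto. apply meas_compl; auto. tauto.
Qed.

Lemma meas_finunion {X} (P : ProbSpace X) (F : nat -> X -> Prop) n :
  (forall k, meas P (F k)) -> meas P (fun x => exists k, (k < n)%nat /\ F k x).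
Proof. intros H. apply meas_cunion. intros k. apply meas_const. auto. Qed.

Lemma mu_finunion {X} (P : ProbSpace X) (F : nat -> X -> Prop) n :
  (forall k, meas P (F k)) -> (forall k l x, F k x -> F l x -> k = l) ->
  mu P (fun x => exists k, (k < n)%nat /\ F k x) = rsum n (fun k => mu P (F k)).
Proof. intros HF Hd. induction n.
  - rewrite rsum_0. rewrite <- (mu_empty P). apply mu_ext. intros x; split; [intros [k [Hk _]]; lia|tauto].
  - rewrite rsum_S, <- IHn. rewrite <- mu_add2; auto using meas_finunion.
    + apply mu_ext. intros x; split.
      * intros [k [Hk Fk]]. destruct (Nat.eq_dec k n). subst; auto. left; exists k; split; auto; lia.
      * intros [[k [Hk Fk]]|Fn]; [exists k|exists n]; split; auto; lia.
    + intros x [k [Hk Fk]] Fn. specialize (Hd _ _ _ Fk Fn). lia.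
Qed.

Lemma plogp_eq x : plogp x = x * ln x.
Proof. unfold plogp. destruct (Req_EM_T x 0); subst; lra. Qed.

Lemma ln_le_sub1 t : 0 < t -> ln t <= t - 1.
Proof. intros H. pose proof (exp_ineq1_le (ln t)). rewrite exp_ln in H0; lra. Qed.

Lemma term_ineq a p q c : 0 <= a -> a <= p -> a <= q -> 0 < c ->
  a * ln p + a * ln q + a - c * (p * q) + a * ln c <= plogp a.
Proof. intros Ha Hp Hq Hc. rewrite plogp_eq.
  destruct (Rle_lt_or_eq_dec 0 a Ha) as [Ha'|<-].
  - assert (Hw : 0 < c * (p * q)) by (apply Rmult_lt_0_compat; [lra| apply Rmult_lt_0_compat; lra]).
    pose proof (ln_le_sub1 (c * (p*q) / a) ltac:(apply Rdiv_lt_0_compat; lra)) as H.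
    unfold Rdiv in H. rewrite !ln_mult, ln_Rinv in H by (repeat apply Rmult_lt_0_compat; try apply Rinv_0_lt_compat; lra).
    apply Rmult_le_compat_l with (r := a) in H; [|lra].
    replace (a * (c * (p * q) * / a - 1)) with (c*(p*q) - a) in H by (field; lra).
    replace (a * (ln c + (ln p + ln q) + - ln a)) with (a*ln c + a*ln p + a*ln q - a*ln a) in H by ring. lra.
  - assert (0 <= c * (p*q)) by (apply Rmult_le_pos; [lra| apply Rmult_le_pos; lra]). lra.
Qed.

Lemma mu_split {X} (P : ProbSpace X) (Q : FinPartition X P) A : meas P A ->
  mu P A = rsum (ncells Q) (fun i => mu P (fun x => A x /\ cell Q x = i)).
Proof. intros HA. rewrite <- mu_finunion.
  - apply mu_ext. intros x; split.
    + intros H. exists (cell Q x). split; auto. apply cell_lt.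
    + intros [k [_ [H _]]]; auto.
  - intros k. apply meas_and; auto. apply cell_meas.
  - intros k l x [_ H1] [_ H2]. congruence.
Qed.

Lemma mu_le1 {X} (P : ProbSpace X) A : meas P A -> mu P A <= 1.
Proof. intros H. rewrite <- (mu_full P). apply mu_mono; auto. apply meas_full. Qed.

Definition pp {X} {P : ProbSpace X} (S : FinPartition X P) i := mu P (fun x => cell S x = i).
Definition aa {X} {P : ProbSpace X} (S T : FinPartition X P) i j :=
  mu P (fun x => cell S x = i /\ cell T x = j).

Lemma meas_cell2 {X} {P : ProbSpace X} (S T : FinPartition X P) i j :
  meas P (fun x => cell S x = i /\ cell T x = j).
Proof. apply meas_and; apply cell_meas. Qed.

Lemma sum_pp {X} {P : ProbSpace X} (S : FinPartition X P) : rsum (ncells S) (pp S) = 1.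
Proof. rewrite <- (mu_full P). rewrite (mu_split P S) by apply meas_full.
  apply rsum_ext. intros. apply mu_ext. tauto. Qed.

Lemma sum_aa_j {X} {P : ProbSpace X} (S T : FinPartition X P) i :
  rsum (ncells T) (aa S T i) = pp S i.
Proof. unfold pp. rewrite (mu_split P T) by apply cell_meas. reflexivity. Qed.

Lemma sum_aa_i {X} {P : ProbSpace X} (S T : FinPartition X P) j :
  rsum (ncells S) (fun i => aa S T i j) = pp T j.
Proof. unfold pp. rewrite (mu_split P S) by apply cell_meas.
  apply rsum_ext. intros. apply mu_ext. tauto. Qed.

Lemma aa_nonneg {X} {P : ProbSpace X} (S T : FinPartition X P) i j : 0 <= aa S T i j.
Proof. apply mu_nonneg, meas_cell2. Qed.

Lemma aa_le_p {X} {P : ProbSpace X} (S T : FinPartition X P) i j : aa S T i j <= pp S i.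
Proof. apply mu_mono; [apply meas_cell2| apply cell_meas| tauto]. Qed.

Lemma aa_le_q {X} {P : ProbSpace X} (S T : FinPartition X P) i j : aa S T i j <= pp T j.
Proof. apply mu_mono; [apply meas_cell2| apply cell_meas| tauto]. Qed.

Lemma rsum_mul_r n f c : rsum n (fun i => f i * c) = rsum n f * c.
Proof. rewrite Rmult_comm, <- rsum_scal. apply rsum_ext; intros; ring. Qed.

Lemma rsum_comb m (A B C D : nat -> R) c c' :
  rsum m (fun j => A j - B j * c - C j - B j + c' * D j) =
  rsum m A - rsum m B * c - rsum m C - rsum m B + c' * rsum m D.
Proof. induction m; [unfold rsum; simpl; ring|]. rewrite !rsum_S, IHm. ring. Qed.

Lemma info_ineq {X} {P : ProbSpace X} (S T : FinPartition X P) (e : nat -> nat -> bool) (K : R) :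
  1 <= K ->
  ln K * rsum (ncells S) (fun i => rsum (ncells T) (fun j => if e i j then aa S T i j else 0))
  <= mutual_info S T + (K - 1) * rsum (ncells S) (fun i => rsum (ncells T) (fun j => if e i j then pp S i * pp T j else 0)).
Proof. intros HK.
  set (n := ncells S). set (m := ncells T).
  set (g := fun i j => plogp (aa S T i j) - aa S T i j * ln (pp S i) - aa S T i j * ln (pp T j)
                       - aa S T i j + pp S i * pp T j).
  set (h := fun i j => ln K * (if e i j then aa S T i j else 0) - (K - 1) * (if e i j then pp S i * pp T j else 0)).
  assert (Hle : rsum n (fun i => rsum m (h i)) <= rsum n (fun i => rsum m (g i))).
  { apply rsum_le; intros i _; apply rsum_le; intros j _. unfold g, h.
    pose proof (aa_nonneg S T i j). pose proof (aa_le_p S T i j). pose proof (aa_le_q S T i j).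
    destruct (e i j).
    - pose proof (term_ineq (aa S T i j) (pp S i) (pp T j) K ltac:(lra) ltac:(lra) ltac:(lra) ltac:(lra)). lra.
    - pose proof (term_ineq (aa S T i j) (pp S i) (pp T j) 1 ltac:(lra) ltac:(lra) ltac:(lra) ltac:(lra)).
      rewrite ln_1 in H2. lra. }
  assert (Hh : rsum n (fun i => rsum m (h i)) =
     ln K * rsum n (fun i => rsum m (fun j => if e i j then aa S T i j else 0))
     - (K - 1) * rsum n (fun i => rsum m (fun j => if e i j then pp S i * pp T j else 0))).
  { unfold h. rewrite <- !rsum_scal, <- rsum_minus. apply rsum_ext; intros.
    rewrite <- !rsum_scal, <- rsum_minus. reflexivity. }
  assert (Hg : rsum n (fun i => rsum m (g i)) = mutual_info S T).
  { unfold g. 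
    assert (E1 : forall i, rsum m (fun j => plogp (aa S T i j) - aa S T i j * ln (pp S i) - aa S T i j * ln (pp T j)
                       - aa S T i j + pp S i * pp T j) =
       rsum m (fun j => plogp (aa S T i j)) - pp S i * ln (pp S i) - rsum m (fun j => aa S T i j * ln (pp T j))
       - pp S i + pp S i).
    { intros i. rewrite (rsum_comb m (fun j => plogp (aa S T i j)) (aa S T i) (fun j => aa S T i j * ln (pp T j)) (pp T)).
      unfold m. rewrite sum_aa_j.
      unfold m. pose proof (sum_pp T) as HT. unfold pp in HT |- *. rewrite HT. ring. }
    rewrite (rsum_ext _ _ _ (fun i _ => E1 i)).
    rewrite rsum_plus, !rsum_minus.
    rewrite (rsum_swap n m (fun i j => aa S T i j * ln (pp T j))).
    rewrite (rsum_ext m _ (fun j => pp T j * ln (pp T j))) by (intros; rewrite rsum_mul_r; unfold n; rewrite sum_aa_i; reflexivity).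
    unfold mutual_info, entropy, entropy_join. fold n m.
    rewrite (rsum_ext n (fun i => plogp _) (fun i => pp S i * ln (pp S i))) by (intros; apply plogp_eq).
    rewrite (rsum_ext m (fun i => plogp _) (fun i => pp T i * ln (pp T i))) by (intros; apply plogp_eq).
    unfold pp, aa. ring. }
  lra.
Qed.

Definition bb {X} {P : ProbSpace X} (S T : FinPartition X P) (U : X -> Prop) i j :=
  mu P (fun x => U x /\ (cell S x = i /\ cell T x = j)).
Definition bpos {X} {P : ProbSpace X} (S T : FinPartition X P) U i j : bool :=
  if Rlt_dec 0 (bb S T U i j) then true else false.
Definition beta {X} {P : ProbSpace X} (T : FinPartition X P) (U : X -> Prop) j :=
  mu P (fun x => U x /\ cell T x = j).
Definition piw {X} {P : ProbSpace X} (S T : FinPartition X P) U j :=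
  rsum (ncells S) (fun i => if bpos S T U i j then pp S i else 0).
Definition big {X} {P : ProbSpace X} (S T : FinPartition X P) U d j : bool :=
  if Rle_dec d (piw S T U j) then true else false.
Definition cov {X} {P : ProbSpace X} (S T : FinPartition X P) U (A : list nat) j : bool :=
  existsb (fun i => bpos S T U i j) A.
Definition MM {X} {P : ProbSpace X} (S T : FinPartition X P) U d A :=
  rsum (ncells T) (fun j => if big S T U d j && negb (cov S T U A j) then beta T U j else 0).

Lemma pp_nonneg {X} {P : ProbSpace X} (S : FinPartition X P) i : 0 <= pp S i.
Proof. apply mu_nonneg, cell_meas. Qed.

Lemma beta_nonneg {X} {P : ProbSpace X} (T : FinPartition X P) U j : meas P U -> 0 <= beta T U j.
Proof. intros; apply mu_nonneg, meas_and; auto; apply cell_meas. Qed.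

Lemma bb_nonneg {X} {P : ProbSpace X} (S T : FinPartition X P) U i j : meas P U -> 0 <= bb S T U i j.
Proof. intros; apply mu_nonneg, meas_and; auto; apply meas_cell2. Qed.

Lemma bb_le {X} {P : ProbSpace X} (S T : FinPartition X P) U i j : meas P U ->
  bb S T U i j <= (if bpos S T U i j then aa S T i j else 0).
Proof. intros HU. unfold bpos. destruct (Rlt_dec 0 (bb S T U i j)).
  - apply mu_mono; [apply meas_and; auto; apply meas_cell2 | apply meas_cell2 | tauto].
  - lra. Qed.

Lemma sum_bb {X} {P : ProbSpace X} (S T : FinPartition X P) U j : meas P U ->
  rsum (ncells S) (fun i => bb S T U i j) = beta T U j.
Proof. intros HU. unfold beta. rewrite (mu_split P S) by (apply meas_and; auto; apply cell_meas).
  apply rsum_ext. intros. apply mu_ext. tauto. Qed.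

Lemma sum_beta {X} {P : ProbSpace X} (T : FinPartition X P) U : meas P U ->
  rsum (ncells T) (beta T U) = mu P U.
Proof. intros HU. rewrite (mu_split P T U HU). reflexivity. Qed.

Lemma small_mass {X} {P : ProbSpace X} (S T : FinPartition X P) U d : meas P U -> 0 < d <= 1 ->
  ln (/ d) * rsum (ncells T) (fun j => if big S T U d j then 0 else beta T U j) <= mutual_info S T + 1.
Proof. intros HU Hd.
  set (e := fun i j => negb (big S T U d j) && bpos S T U i j).
  assert (HK : 1 <= / d). { rewrite <- Rinv_1. apply Rinv_le_contravar; lra. }
  pose proof (info_ineq S T e (/ d) HK) as H.
  assert (Hln : 0 <= ln (/ d)). { rewrite <- ln_1. destruct (Req_dec (/d) 1) as [->|]; [lra|]. left; apply ln_increasing; lra. }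
  assert (H1 : rsum (ncells T) (fun j => if big S T U d j then 0 else beta T U j)
      <= rsum (ncells S) (fun i => rsum (ncells T) (fun j => if e i j then aa S T i j else 0))).
  { rewrite rsum_swap. apply rsum_le. intros j _. unfold e.
    destruct (big S T U d j); simpl.
    - apply rsum_nonneg; intros; lra.
    - rewrite <- (sum_bb S T U j HU). apply rsum_le. intros i _. apply bb_le; auto. }
  assert (H2 : rsum (ncells S) (fun i => rsum (ncells T) (fun j => if e i j then pp S i * pp T j else 0)) <= d).
  { rewrite rsum_swap.
    apply Rle_trans with (rsum (ncells T) (fun j => d * pp T j)).
    - apply rsum_le. intros j _. unfold e.
      destruct (big S T U d j) eqn:Eb; simpl.
      + rewrite rsum_const0. pose proof (pp_nonneg T j). nra.
      + unfold big in Eb. destruct (Rle_dec d (piw S T U j)); [discriminate|].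
        unfold piw in n.
        rewrite (rsum_ext _ _ (fun i => (if bpos S T U i j then pp S i else 0) * pp T j))
          by (intros; destruct (bpos S T U i j); ring).
        rewrite rsum_mul_r. pose proof (pp_nonneg T j). nra.
    - rewrite rsum_scal. pose proof (sum_pp T) as HT. unfold pp in HT |- *. rewrite HT. lra. }
  assert (H3 : (/ d - 1) * rsum (ncells S) (fun i => rsum (ncells T) (fun j => if e i j then pp S i * pp T j else 0)) <= 1).
  { apply Rle_trans with ((/d - 1) * d). apply Rmult_le_compat_l; lra.
    field_simplify; lra. }
  assert (H4 : ln (/d) * rsum (ncells T) (fun j => if big S T U d j then 0 else beta T U j) <=
               ln (/d) * rsum (ncells S) (fun i => rsum (ncells T) (fun j => if e i j then aa S T i j else 0))).
  { apply Rmult_le_compat_l; auto. }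
  lra.
Qed.

Lemma argmax n (g : nat -> R) : (0 < n)%nat -> exists i, (i < n)%nat /\ forall k, (k < n)%nat -> g k <= g i.
Proof. intros Hn. induction n; [lia|]. destruct n.
  - exists 0%nat. split; [lia|]. intros k Hk. replace k with 0%nat by lia. lra.
  - destruct IHn as [i [Hi H]]; [lia|].
    destruct (Rle_dec (g (S n)) (g i)).
    + exists i. split; [lia|]. intros k Hk. destruct (Nat.eq_dec k (S n)); [subst; auto|apply H; lia].
    + exists (S n). split; [lia|]. intros k Hk. destruct (Nat.eq_dec k (S n)); [subst; lra|].
      specialize (H k ltac:(lia)). lra.
Qed.

Lemma greedy_step {X} {P : ProbSpace X} (S T : FinPartition X P) U d A : meas P U -> 0 < d ->
  exists i, MM S T U d (i :: A) <= (1 - d) * MM S T U d A.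
Proof. intros HU Hd.
  set (n := ncells S). set (m := ncells T).
  set (g := fun i => rsum m (fun j => if big S T U d j && negb (cov S T U A j) && bpos S T U i j then beta T U j else 0)).
  assert (Hg : forall i, MM S T U d (i :: A) = MM S T U d A - g i).
  { intros i. unfold MM, g. fold m. rewrite <- rsum_minus. apply rsum_ext. intros j _.
    unfold cov; simpl. fold (cov S T U A j).
    destruct (big S T U d j), (bpos S T U i j), (cov S T U A j); simpl; ring. }
  assert (Hn : (0 < n)%nat).
  { destruct n eqn:E; [|lia]. pose proof (sum_pp S). unfold n in E. rewrite E in H. unfold rsum in H; simpl in H. lra. }
  destruct (argmax n g Hn) as [i0 [_ Hi0]].
  exists i0. rewrite Hg.
  assert (Havg : rsum n (fun i => pp S i * g i) <= g i0).
  { apply Rle_trans with (rsum n (fun i => pp S i * g i0)).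
    - apply rsum_le. intros i Hi. apply Rmult_le_compat_l. apply pp_nonneg. auto.
    - rewrite rsum_mul_r. unfold n. rewrite sum_pp. lra. }
  assert (Hsum : rsum n (fun i => pp S i * g i) =
      rsum m (fun j => if big S T U d j && negb (cov S T U A j) then beta T U j * piw S T U j else 0)).
  { unfold g. rewrite (rsum_ext n _ (fun i => rsum m (fun j => pp S i * (if big S T U d j && negb (cov S T U A j) && bpos S T U i j then beta T U j else 0))))
      by (intros; rewrite rsum_scal; reflexivity).
    rewrite rsum_swap. apply rsum_ext. intros j _. unfold piw. rewrite <- rsum_scal.
    destruct (big S T U d j && negb (cov S T U A j)); simpl.
    - apply rsum_ext. intros. destruct (bpos S T U i j); ring.
    - rewrite (rsum_ext _ _ (fun _ => 0)) by (intros; ring). rewrite rsum_const0; reflexivity. }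
  assert (Hlow : d * MM S T U d A <= rsum n (fun i => pp S i * g i)).
  { rewrite Hsum. unfold MM. rewrite <- rsum_scal. apply rsum_le. intros j _.
    destruct (big S T U d j) eqn:Eb; simpl; [|lra].
    destruct (cov S T U A j); simpl; [lra|].
    unfold big in Eb. destruct (Rle_dec d (piw S T U j)); [|discriminate].
    pose proof (beta_nonneg T U j HU). nra. }
  lra.
Qed.

Lemma MM_nonneg {X} {P : ProbSpace X} (S T : FinPartition X P) U d A : meas P U -> 0 <= MM S T U d A.
Proof. intros HU. apply rsum_nonneg. intros j _. destruct (_ && _); [apply beta_nonneg; auto|lra]. Qed.

Lemma greedy {X} {P : ProbSpace X} (S T : FinPartition X P) U d : meas P U -> 0 < d <= 1 ->
  forall k, exists A, length A = k /\ MM S T U d A <= (1 - d) ^ k.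
Proof. intros HU Hd k. induction k.
  - exists nil. split; auto. simpl. apply Rle_trans with (rsum (ncells T) (beta T U)).
    + apply rsum_le. intros j _. destruct (_ && _); [lra|apply beta_nonneg; auto].
    + rewrite sum_beta by auto. apply mu_le1; auto.
  - destruct IHk as [A [HA HM]]. destruct (greedy_step S T U d A HU ltac:(lra)) as [i Hi].
    exists (i :: A). split; simpl; [lia|].
    apply Rle_trans with ((1 - d) * MM S T U d A); auto. apply Rmult_le_compat_l; lra.
Qed.

Lemma bb_pos_witness {X} {P : ProbSpace X} (S T : FinPartition X P) U i j :
  bpos S T U i j = true -> exists y, U y /\ cell S y = i /\ cell T y = j.
Proof. unfold bpos, bb. destruct (Rlt_dec _ _) as [H|]; [|discriminate]. intros _.
  apply NNPP. intros Hn. rewrite (mu_ext P _ (fun _ => False)) in H by firstorder.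
  rewrite mu_empty in H. lra. Qed.

Lemma NoDup_map_inj {A B} (f : A -> B) l : NoDup l -> (forall x y, In x l -> In y l -> f x = f y -> x = y) ->
  NoDup (map f l).
Proof. induction l; intros Hn Hi; simpl; constructor.
  - inversion Hn; subst. intros Hin. apply in_map_iff in Hin. destruct Hin as [z [Hz Hzl]].
    assert (z = a) by (apply Hi; simpl; auto). subst. contradiction.
  - inversion Hn; subst. apply IHl; auto. intros; apply Hi; simpl; auto. Qed.

Lemma construct {X} {P : ProbSpace X} (S T : FinPartition X P) U (A : list nat) (x0 : X) :
  meas P U -> U x0 ->
  exists s : list X, NoDup s /\ (0 < length s)%nat /\ (length s <= 1 + length A)%nat /\ (forall x, In x s -> U x) /\
    (forall j, cov S T U A j = true -> forall x, U x -> cell T x = j ->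
       inter U (saturate T (inter U (saturate S (fun y => In y s)))) x).
Proof. intros HU Hx0.
  set (meets := fun i => exists x, U x /\ cell S x = i).
  set (pick := fun i => epsilon (inhabits x0) (fun x => U x /\ cell S x = i)).
  assert (Hpick : forall i, meets i -> U (pick i) /\ cell S (pick i) = i).
  { intros i Hm. apply (epsilon_spec (inhabits x0) (fun x => U x /\ cell S x = i)). exact Hm. }
  set (mb := fun i => if excluded_middle_informative (meets i) then true else false).
  set (rows := filter mb (nodup Nat.eq_dec (cell S x0 :: A))).
  assert (Hrows : forall i, In i rows <-> In i (cell S x0 :: A) /\ meets i).
  { intros i. unfold rows. rewrite filter_In, nodup_In. unfold mb.
    destruct (excluded_middle_informative (meets i)); intuition discriminate. }
  exists (map pick rows). split; [|split; [|split; [|split]]].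
  - apply NoDup_map_inj. apply NoDup_filter, NoDup_nodup.
    intros a b Ha Hb Hab. apply Hrows in Ha, Hb.
    rewrite <- (proj2 (Hpick a (proj2 Ha))), <- (proj2 (Hpick b (proj2 Hb))). congruence.
  - destruct (map pick rows) eqn:E; simpl; [|lia].
    assert (In (cell S x0) rows) by (apply Hrows; split; [left; auto| exists x0; auto]).
    destruct rows; [contradiction| discriminate].
  - rewrite length_map. unfold rows. eapply Nat.le_trans. apply filter_length_le.
    change (1 + length A)%nat with (length (cell S x0 :: A)). apply (NoDup_incl_length (NoDup_nodup _ _)). intros i Hi. apply nodup_In in Hi. simpl in Hi |- *. auto.
  - intros x Hx. apply in_map_iff in Hx. destruct Hx as [i [<- Hi]]. apply Hrows in Hi. apply Hpick, Hi.
  - intros j Hc x Hx Hxj. split; auto.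
    unfold cov in Hc. apply existsb_exists in Hc. destruct Hc as [i [HiA Hb]].
    destruct (bb_pos_witness S T U i j Hb) as [y [Uy [Sy Ty]]].
    exists y. split; [split; auto|congruence].
    assert (Hm : meets i) by (exists y; auto).
    exists (pick i). split.
    + apply in_map. apply Hrows. split; [right; auto| auto].
    + rewrite (proj2 (Hpick i Hm)). auto.
Qed.

Lemma meas_sat {X} {P : ProbSpace X} (T : FinPartition X P) V : meas P (saturate T V).
Proof. apply (meas_ext P (fun x => exists k, (k < ncells T)%nat /\ ((exists y, V y /\ cell T y = k) /\ cell T x = k))).
  - intros x. split.
    + intros [k [_ [[y [Vy Hy]] Hx]]]. exists y. split; congruence.
    + intros [y [Vy Hy]]. exists (cell T x). split; [apply cell_lt|]. split; auto. exists y; auto.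
  - apply meas_finunion. intros k. apply meas_const, cell_meas.
Qed.

Lemma final_measure {X} {P : ProbSpace X} (S T : FinPartition X P) U d A (s : list X) :
  meas P U ->
  (forall j, cov S T U A j = true -> forall x, U x -> cell T x = j ->
       inter U (saturate T (inter U (saturate S (fun y => In y s)))) x) ->
  mu P U - MM S T U d A - rsum (ncells T) (fun j => if big S T U d j then 0 else beta T U j)
  <= mu P (inter U (saturate T (inter U (saturate S (fun y => In y s))))).
Proof. intros HU Hcov.
  set (W := fun x => exists k, (k < ncells T)%nat /\ (cov S T U A k = true /\ (U x /\ cell T x = k))).
  assert (HW : mu P W = rsum (ncells T) (fun k => if cov S T U A k then beta T U k else 0)).
  { unfold W. rewrite mu_finunion.
    - apply rsum_ext. intros k _. destruct (cov S T U A k).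
      + apply mu_ext. intuition.
      + rewrite (mu_ext P _ (fun _ => False)) by (intuition discriminate). apply mu_empty.
    - intros k. apply meas_const, meas_and; auto; apply cell_meas.
    - intros k l x [_ [_ H1]] [_ [_ H2]]. congruence. }
  assert (Hmono : mu P W <= mu P (inter U (saturate T (inter U (saturate S (fun y => In y s)))))).
  { apply mu_mono.
    - apply meas_finunion. intros k. apply meas_const, meas_and; auto; apply cell_meas.
    - unfold inter. apply meas_and; auto. apply meas_sat.
    - intros x [k [_ [Hc [Ux Hx]]]]. eapply Hcov; eauto. }
  rewrite <- (sum_beta T U HU).
  assert (Hterm : rsum (ncells T) (beta T U) <= rsum (ncells T) (fun k => if cov S T U A k then beta T U k else 0)
     + MM S T U d A + rsum (ncells T) (fun j => if big S T U d j then 0 else beta T U j)).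
  { unfold MM. rewrite <- !rsum_plus. apply rsum_le. intros j _.
    pose proof (beta_nonneg T U j HU).
    destruct (cov S T U A j), (big S T U d j); simpl; lra. }
  lra.
Qed.

Lemma exp_pow_nat a k : exp a ^ k = exp (INR k * a).
Proof. induction k. simpl. rewrite Rmult_0_l, exp_0. reflexivity.
  rewrite S_INR. simpl pow. rewrite IHk, <- exp_plus. f_equal. ring. Qed.

Lemma ln_mono x y : 0 < x -> x <= y -> ln x <= ln y.
Proof. intros. destruct (Req_dec x y); [subst; lra|]. left; apply ln_increasing; lra. Qed.

Lemma info_nonneg {X} {P : ProbSpace X} (S T : FinPartition X P) : 0 <= mutual_info S T.
Proof. pose proof (info_ineq S T (fun _ _ => false) 1 ltac:(lra)) as H. rewrite ln_1 in H. lra. Qed.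

Lemma U_inhabited {X} (P : ProbSpace X) U : meas P U -> 0 < mu P U -> exists x, U x.
Proof. intros HU H. apply NNPP. intros Hn. rewrite (mu_ext P _ (fun _ => False)) in H by firstorder.
  rewrite mu_empty in H. lra. Qed.

Theorem mainTheorem10 :
  forall alpha eta : R, 0 < alpha <= 1 -> 0 < eta < alpha ->
  exists C : R,
  forall (X : Type) (P : ProbSpace X) (S T : FinPartition X P) (U : X -> Prop),
    meas P U -> alpha <= mu P U ->
    exists s : list X,
      NoDup s /\ (0 < length s)%nat /\ (forall x, In x s -> U x) /\
      ln (INR (length s)) <= C * (mutual_info S T + 1) /\
      mu P (inter U (saturate T (inter U (saturate S (fun y => In y s)))))
        > mu P U - eta.
Proof.
  intros alpha eta Ha He.
  set (c0 := ln (2 / eta)).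
  assert (Hc0 : 0 < c0). { unfold c0. rewrite <- ln_1. apply ln_increasing; [lra|].
    apply Rmult_lt_reg_r with eta; [lra|]. unfold Rdiv. rewrite Rmult_assoc, Rinv_l; lra. }
  assert (Hl0 : 0 <= ln (c0 + 2)). { rewrite <- ln_1. apply ln_mono; lra. }
  exists (ln (c0 + 2) + 2 / eta).
  intros X P S T U HU HUa.
  set (I := mutual_info S T).
  pose proof (info_nonneg S T) as HI. fold I in HI.
  set (L := 2 * (I + 1) / eta).
  assert (HL : 0 < L) by (unfold L; apply Rdiv_lt_0_compat; lra).
  set (d := exp (- L)).
  assert (Hd0 : 0 < d) by apply exp_pos.
  assert (Hd1 : d < 1). { unfold d. rewrite <- exp_0. apply exp_increasing. lra. }
  assert (Hinvd : / d = exp L). { unfold d. rewrite exp_Ropp, Rinv_inv. reflexivity. }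
  pose proof (small_mass S T U d HU ltac:(lra)) as Hsm. fold I in Hsm.
  rewrite Hinvd, ln_exp in Hsm.
  set (Sm := rsum (ncells T) (fun j => if big S T U d j then 0 else beta T U j)) in *.
  assert (HSm : Sm <= eta / 2).
  { apply Rmult_le_reg_l with L; auto.
    replace (L * (eta / 2)) with (I + 1) by (unfold L; field; lra). lra. }
  set (x := c0 / d).
  assert (Hx : 0 < x) by (unfold x; apply Rdiv_lt_0_compat; lra).
  destruct (archimed x) as [Hup1 Hup2].
  set (k := Z.to_nat (up x)).
  assert (Hk : INR k = IZR (up x)).
  { unfold k. rewrite INR_IZR_INZ, Z2Nat.id; auto. apply le_IZR. lra. }
  destruct (greedy S T U d HU ltac:(lra) k) as [A [HAk HMA]].
  assert (HMk : MM S T U d A < eta / 2).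
  { apply Rle_lt_trans with ((1 - d) ^ k); auto.
    apply Rle_lt_trans with (exp (- d) ^ k).
    - apply pow_incr. split; [lra|]. pose proof (exp_ineq1_le (- d)). lra.
    - rewrite exp_pow_nat. apply Rlt_le_trans with (exp (- c0)).
      + apply exp_increasing. rewrite Hk.
        assert (c0 = x * d) by (unfold x; field; lra). nra.
      + unfold c0. rewrite exp_Ropp, exp_ln by (apply Rdiv_lt_0_compat; lra).
        right. field. lra. }
  destruct (U_inhabited P U HU ltac:(lra)) as [x0 Hx0].
  destruct (construct S T U A x0 HU Hx0) as [s [Hnd [Hpos [Hlen [HsU Hcov]]]]].
  exists s. split; [auto|split; [auto|split; [auto|split]]].
  -
    assert (Hls : INR (length s) <= x + 2).
    { apply le_INR in Hlen. rewrite plus_INR in Hlen. simpl INR in Hlen. rewrite HAk, Hk in Hlen. lra. }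
    assert (Hpl : 0 < INR (length s)) by (apply lt_0_INR; auto).
    apply Rle_trans with (ln (x + 2)). apply ln_mono; auto.
    assert (Hx2 : x + 2 <= (c0 + 2) * exp L).
    { unfold x. unfold Rdiv. rewrite <- Hinvd.
      assert (1 <= / d). { rewrite <- Rinv_1. apply Rinv_le_contravar; lra. } nra. }
    apply Rle_trans with (ln ((c0 + 2) * exp L)). apply ln_mono; lra.
    rewrite ln_mult, ln_exp by (try apply exp_pos; lra).
    unfold L. fold I. 
    replace ((ln (c0 + 2) + 2 / eta) * (I + 1)) with (ln (c0 + 2) * (I + 1) + 2 * (I + 1) / eta) by (field; lra).
    nra.
  - pose proof (final_measure S T U d A s HU Hcov) as Hf. fold Sm in Hf. lra.
Qed.
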